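(* Let $f:\mathbb R^n\to\mathbb R$ be continuously differentiable and let $\{x^k\}$ be generated by $x^{k+1}=x^k+t_kd^k$ with $t_k\ge0$. Suppose $\inf_k f(x^k)>-\infty$ and: (a) $f$ satisfies the $L$-descent condition for some $L>0$; (b) $\{d^k\}$ is gradient associated with $\{x^k\}$ and satisfies the sufficient descent condition $\langle\nabla f(x^k),d^k\rangle\le-\kappa\|d^k\|^2$ for all $k\in\mathbb N$, for some $\kappa>0$; (c) $\sum_{k=1}^\infty t_k=\infty$ and there are $\delta\in(0,2\kappa)$ and $N\in\mathbb N$ with $t_k\le \frac{2\kappa-\delta}{L}$ for all $k\ge N$. Then every accumulation point of $\{x^k\}$ is a stationary point of $f$; if $\{x^k\}$ is bounded then its set of accumulation points is nonempty, compact and connected; and if $\{x^k\}$ has an isolated accumulation point then $\{x^k\}$ converges to it. Moreover, if $\{t_k\}$ is bounded away from $0$, then $\nabla f(x^k)\to0$ as $k\to\infty$.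
   Context: $f$ satisfies the $L$-descent condition if $f(y)\le f(x)+\langle\nabla f(x),y-x\rangle+\frac L2\|y-x\|^2$ for all $x,y\in\mathbb R^n$. A direction sequence $\{d^k\}$ is called gradient associated with $\{x^k\}$ if for every infinite set $J\subset\mathbb N$, $d^k\to0$ along $J$ implies $\nabla f(x^k)\to 0$ along $J$. *)

(* Defs.v *)
(* R^n is 'rV[R]_n (its library topology is the
   product topology, which is the Euclidean one); the Euclidean inner
   product and norm are defined explicitly below. *)
From HB Require Import structures.
From mathcomp Require Import all_boot all_order all_algebra.
From mathcomp Require Import all_classical all_reals all_analysis.
Set Implicit Arguments. Unset Strict Implicit. Unset Printing Implicit Defensive.
Import Order.TTheory GRing.Theory Num.Theory.
Import numFieldNormedType.Exports.
Local Open Scope classical_set_scope.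
Local Open Scope ring_scope.

Definition dotp (R : realType) (n : nat) (u v : 'rV[R]_n) : R :=
  \sum_(i < n) u ord0 i * v ord0 i.

Definition enorm (R : realType) (n : nat) (u : 'rV[R]_n) : R :=
  Num.sqrt (dotp u u).

Definition grad (R : realType) (n : nat) (f : 'rV[R]_n -> R) (x : 'rV[R]_n)
  : 'rV[R]_n := \row_(i < n) ('d f x (delta_mx ord0 i : 'rV[R]_n)).

Definition C1 (R : realType) (n : nat) (f : 'rV[R]_n -> R) : Prop :=
  (forall x, differentiable f x) /\ continuous (grad f).

Definition L_descent (R : realType) (n : nat) (f : 'rV[R]_n -> R) (L : R) :=
  forall x y : 'rV[R]_n,
    f y <= f x + dotp (grad f x) (y - x) + L / 2 * enorm (y - x) ^+ 2.

Definition cvg0_along (R : realType) (n : nat) (J : set nat)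
  (u : nat -> 'rV[R]_n) : Prop :=
  forall e : R, 0 < e -> exists N : nat,
    forall k, J k -> (N <= k)%N -> enorm (u k) < e.

Definition gradient_associated (R : realType) (n : nat) (f : 'rV[R]_n -> R)
  (x d : nat -> 'rV[R]_n) : Prop :=
  forall J : set nat, ~ finite_set J ->
    cvg0_along J d -> cvg0_along J (fun k => grad f (x k)).

Definition isolated_in (R : realType) (n : nat) (A : set 'rV[R]_n)
  (p : 'rV[R]_n) : Prop :=
  A p /\ exists U, nbhs p U /\ A `&` U = [set p].

(* Main.v *)
Require Import Defs.
From HB Require Import structures.
From mathcomp Require Import all_boot all_order all_algebra.
From mathcomp Require Import all_classical all_reals all_analysis.
Import Order.TTheory GRing.Theory Num.Theory.
Import numFieldNormedType.Exports.
Local Open Scope classical_set_scope.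
Local Open Scope ring_scope.
From mathcomp Require Import ring lra.


Section S.
Variables (R : realType) (n : nat).
Implicit Types u v : 'rV[R]_n.

Lemma dotp_ge0 u : 0 <= dotp u u.
Proof. rewrite /dotp; apply: sumr_ge0 => i _; by rewrite -expr2 sqr_ge0. Qed.

Lemma enorm_ge0 u : 0 <= enorm u.
Proof. exact: sqrtr_ge0. Qed.

Lemma enorm_sq u : enorm u ^+ 2 = dotp u u.
Proof. by rewrite /enorm sqr_sqrtr // dotp_ge0. Qed.

Lemma dotpZr a u v : dotp u (a *: v) = a * dotp u v.
Proof.
rewrite /dotp mulr_sumr; apply: eq_bigr => i _; rewrite mxE; ring.
Qed.

Lemma dotpZ2 a u : dotp (a *: u) (a *: u) = a ^+ 2 * dotp u u.
Proof.
rewrite /dotp mulr_sumr; apply: eq_bigr => i _; rewrite !mxE; ring.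
Qed.

Lemma enormZ_sq a u : enorm (a *: u) ^+ 2 = a ^+ 2 * enorm u ^+ 2.
Proof. by rewrite !enorm_sq dotpZ2. Qed.

Lemma coord_le_enorm u i : `|u ord0 i| <= enorm u.
Proof.
rewrite -(sqrtr_sqr (u ord0 i)) /enorm ler_wsqrtr //.
rewrite /dotp (bigD1 i) //= -expr2 lerDl.
by apply: sumr_ge0 => j _; by rewrite -expr2 sqr_ge0.
Qed.

Lemma norm_le_enorm u : `|u| <= enorm u.
Proof.
rewrite [leLHS]/Num.norm /= mx_normrE; apply: bigmax_le; first exact: enorm_ge0.
case=> i j _ /=; rewrite (ord1 i); exact: coord_le_enorm.
Qed.
End S.


Section Topo.
Variables (R : realType) (n : nat).
Implicit Types (y : nat -> 'rV[R]_n) (p z : 'rV[R]_n).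

Lemma ballN p e z : ball p e z = (`|p - z| < e).
Proof. by rewrite -ball_normE. Qed.

Lemma clusterP y p :
  cluster (y @ \oo) p <-> forall e, 0 < e -> forall K, exists k, (K <= k)%N /\ `|p - y k| < e.
Proof.
split.
  move=> H e e0 K.
  have hA : (y @ \oo) [set w | exists2 k, (K <= k)%N & y k = w].
    by exists K => // k /= hk; exists k.
  have [w [[k hk <-] hb]] := H _ _ hA (nbhsx_ballx p e e0).
  by exists k; split => //; rewrite -ballN.
move=> H A B [K _ hA] /nbhs_ballP [e e0 hB].
have [k [hk he]] := H e e0 K.
exists (y k); split; first exact: hA.
by apply: hB; rewrite ballN.
Qed.

Lemma BW (E S : set 'rV[R]_n) y : compact E ->
  (forall K, exists k, (K <= k)%N /\ E (y k) /\ S (y k)) ->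
  exists z, E z /\ forall e, 0 < e -> forall K,
    exists k, (K <= k)%N /\ S (y k) /\ `|z - y k| < e.
Proof.
move=> cE H.
pose G := filter_from setT (fun K => y @` [set k | (K <= k)%N /\ E (y k) /\ S (y k)]).
have FG : Filter G.
  apply: filter_fromT_filter; first by exists 0%N.
  move=> i j; exists (maxn i j) => w [k [hk hI] <-]; split.
    by exists k => //; split => //; apply: leq_trans hk; apply: leq_maxl.
  by exists k => //; split => //; apply: leq_trans hk; apply: leq_maxr.
have PG : ProperFilter G.
  apply: filter_from_proper => K _.
  have [k [hk hI]] := H K; by exists (y k); exists k.
have GE : G E by exists 0%N => // w [k [_ [hE _]] <-].
have [z [Ez cz]] := cE G PG GE.
exists z; split => // e e0 K.
have hA : G (y @` [set k | (K <= k)%N /\ E (y k) /\ S (y k)]) by exists K.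
have [w [[k [hk [_ hS]] <-] hb]] := cz _ _ hA (nbhsx_ballx z e e0).
by exists k; split => //; split => //; rewrite -ballN.
Qed.

Lemma closed_ball_compact p s : 0 < s -> compact [set w | `|p - w| <= s].
Proof.
move=> s0; apply: bounded_closed_compact.
  exists (`|p| + s); split; first exact: num_real.
  move=> M hM w /= hw; apply: ltW; apply: le_lt_trans hM.
  have : `|w| <= `|p| + `|w - p| by rewrite -{1}(subrK p w) addrC ler_normD.
  by rewrite distrC; move=> h; apply: (le_trans h); rewrite lerD2l.
have := @closed_ball_closed _ _ p s; rewrite closed_ballE //.
Qed.
End Topo.


Lemma tail_small (R : realType) (a : nat -> R) (B : R) :
  (forall k, 0 <= a k) -> (forall K, \sum_(0 <= k < K) a k <= B) ->
  forall e, 0 < e -> exists K0, forall i j, (K0 <= i)%N -> \sum_(i <= k < j) a k < e.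
Proof.
move=> a0 hB e e0.
pose E := [set s | exists K, s = \sum_(0 <= k < K) a k].
have hE : has_sup E.
  split; first by exists 0; exists 0%N; rewrite big_geq.
  by exists B => s [K ->].
have [s [K0 ->] hs] := sup_adherent e0 hE.
exists K0 => i j hi.
have [hij|hji] := leqP i j; last by rewrite big_geq // ltnW.
have h1 : \sum_(0 <= k < j) a k <= sup E by apply: sup_upper_bound => //; exists j.
have h2 : \sum_(0 <= k < j) a k = \sum_(0 <= k < i) a k + \sum_(i <= k < j) a k.
  by rewrite -big_cat_nat.
have h3 : \sum_(0 <= k < i) a k = \sum_(0 <= k < K0) a k + \sum_(K0 <= k < i) a k.
  by rewrite -big_cat_nat.
have h4 : 0 <= \sum_(K0 <= k < i) a k by apply: sumr_ge0.
lra.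
Qed.

Lemma small_sq (R : realType) (y e : R) : 0 <= y -> 0 < e -> y ^+ 2 < e ^+ 2 -> y < e.
Proof.
move=> y0 e0 h; by rewrite -(@ltr_pXn2r _ 2%N) // nnegrE ltW.
Qed.

Lemma unbounded_infinite (J : set nat) :
  (forall M, exists k, (M <= k)%N /\ J k) -> ~ finite_set J.
Proof.
move=> H /finite_seqP [s hs].
have [k [hk Jk]] := H (\max_(i <- s) i).+1.
rewrite hs /= in Jk.
have := @leq_bigmax_seq _ s xpredT (fun i => i) k Jk isT.
by rewrite leqNgt hk.
Qed.

Lemma psi_cvg0 (R : realType) (n : nat) (psi : nat -> nat) (u : nat -> 'rV[R]_n) :
  (forall K, (K <= psi K)%N) -> (forall K, enorm (u (psi K)) < 1 / K.+1%:R) ->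
  cvg0_along (range psi) u /\ ~ finite_set (range psi).
Proof.
move=> hpsi hu; split; last first.
  apply: unbounded_infinite => M; exists (psi M); split => //; by exists M.
move=> e e0.
pose K0 := Num.trunc (e^-1).
exists (\max_(K < K0) psi K).+1 => k [K _ <-] hk.
have hK : (K0 <= K)%N.
  rewrite leqNgt; apply/negP => hlt.
  have := leq_bigmax (F := fun i : 'I_K0 => psi i) (Ordinal hlt).
  by rewrite /= leqNgt hk.
apply: (lt_le_trans (hu K)).
have h1 : e^-1 < K0.+1%:R by exact: truncnS_gt.
have h2 : (K0.+1%:R : R) <= K.+1%:R by rewrite ler_nat.
rewrite div1r -[e]invrK lef_pV2 ?posrE ?invr_gt0 //.
exact: ltW (lt_le_trans h1 h2).
Qed.

Lemma key1 (R : realType) (A B C D : R) : A <= B + C -> B < A / 2 -> C <= D -> A / 2 < D.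
Proof. move=> *; lra. Qed.

Lemma tri3 (R : realType) (A B C D r : R) : 0 <= B -> A <= B + C -> B < r / 2 -> C <= D -> D < r / 4 -> A < r.
Proof. move=> *; lra. Qed.

Lemma tri2 (R : realType) (A B C D E : R) : A <= B + C -> B <= D -> C <= E -> A <= E + D.
Proof. move=> *; lra. Qed.
Arguments key1 {R A B C D}.
Arguments tri3 {R A B C D r}.
Arguments tri2 {R A B C D E}.

Lemma fin1 (R : realType) (c r S A : R) : 0 < c -> c ^+ 2 * S <= A -> A < c * r / 4 ->
  S <= r / (4 * c).
Proof.
move=> c0 h1 h2.
rewrite ler_pdivlMr ?mulr_gt0 // -(ler_pM2l c0).
have -> : c * (S * (4 * c)) = 4 * (c ^+ 2 * S) by ring.
lra.
Qed.
Arguments fin1 {R c r S A}.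


Section Main.
Variables (R : realType) (n : nat) (f : 'rV[R]_n -> R)
  (x d : nat -> 'rV[R]_n) (t : nat -> R) (L kappa delta m : R) (N : nat).
Hypothesis Hx : forall k, x k.+1 = x k + t k *: d k.
Hypothesis Ht : forall k, 0 <= t k.
Hypothesis Hm : forall k, m <= f (x k).
Hypothesis HL : 0 < L.
Hypothesis Hdesc : L_descent f L.
Hypothesis Hk : 0 < kappa.
Hypothesis Hsd : forall k, dotp (grad f (x k)) (d k) <= - kappa * enorm (d k) ^+ 2.
Hypothesis Hd : 0 < delta.
Hypothesis Hd2 : delta < 2 * kappa.
Hypothesis HtN : forall k, (N <= k)%N -> t k <= (2 * kappa - delta) / L.

Hypothesis HC1 : C1 f.
Hypothesis Hga : gradient_associated f x d.
Hypothesis Hdiv : (fun K => \sum_(1 <= k < K.+1) t k) @ \oo --> +oo.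

Let a k := t k * enorm (d k) ^+ 2.
Let T := (2 * kappa - delta) / L.

Lemma a_ge0 k : 0 <= a k.
Proof. by rewrite /a mulr_ge0 // exprn_ge0 // enorm_ge0. Qed.

Lemma T_ge0 : 0 <= T.
Proof. by rewrite /T divr_ge0 // ?ltW // subr_gt0. Qed.

Lemma descent k : (N <= k)%N -> f (x k.+1) <= f (x k) - delta / 2 * a k.
Proof.
move=> hk; have := Hdesc (x k) (x k.+1).
have -> : x k.+1 - x k = t k *: d k by rewrite Hx addrAC subrr add0r.
rewrite dotpZr enormZ_sq => h.
have hLt : L * t k <= 2 * kappa - delta.
  by have := HtN k hk; rewrite ler_pdivlMr // mulrC.
set g := dotp _ _ in h; set e2 := enorm (d k) ^+ 2 in h *.
have he2 : 0 <= e2 by rewrite exprn_ge0 // enorm_ge0.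
have h1 : t k * g <= t k * (- kappa * e2) by rewrite ler_wpM2l // Hsd.
have h2 : (L * t k) * (t k * e2) <= (2 * kappa - delta) * (t k * e2).
  by rewrite ler_wpM2r // mulr_ge0.
rewrite /a -/e2.
have h3 : L / 2 * (t k ^+ 2 * e2) = (L * t k) * (t k * e2) / 2 by rewrite expr2; timeout 20 field.
timeout 20 lra.
Qed.

Lemma sumN j : delta / 2 * \sum_(N <= k < N + j) a k <= f (x N) - f (x (N + j)%N).
Proof.
elim: j => [|j IH]; first by rewrite addn0 big_geq // subrr mulr0.
rewrite addnS big_nat_recr /= ?leq_addr //.
have := descent _ (leq_addr j N); timeout 20 lra.
Qed.

Definition Bnd := \sum_(0 <= k < N) a k + 2 / delta * (f (x N) - m).

Lemma psum_bnd K : \sum_(0 <= k < K) a k <= Bnd.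
Proof.
have hfm : 0 <= f (x N) - m by rewrite subr_ge0.
have hdm : 0 <= 2 / delta * (f (x N) - m) by rewrite mulr_ge0 // divr_ge0 // ltW.
have [hKN|hNK] := leqP K N.
  rewrite /Bnd (_ : \sum_(0 <= k < N) a k = \sum_(0 <= k < K) a k + \sum_(K <= k < N) a k);
    last by rewrite -big_cat_nat.
  have : 0 <= \sum_(K <= k < N) a k by apply: sumr_ge0 => *; exact: a_ge0.
  timeout 20 lra.
rewrite /Bnd (_ : \sum_(0 <= k < K) a k = \sum_(0 <= k < N) a k + \sum_(N <= k < K) a k);
  last by rewrite -big_cat_nat // ltnW.
rewrite lerD2l.
have := sumN (K - N); rewrite subnKC; last exact: ltnW.
move=> h.
have := Hm K => hK.
have h' : delta / 2 * \sum_(N <= k < K) a k <= f (x N) - m by timeout 20 lra.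
have -> : \sum_(N <= k < K) a k = 2 / delta * (delta / 2 * \sum_(N <= k < K) a k).
  by timeout 20 field; rewrite gt_eqF.
by rewrite ler_wpM2l // divr_ge0 // ltW.
Qed.

Lemma tail : forall e, 0 < e -> exists K0, forall i j, (K0 <= i)%N -> \sum_(i <= k < j) a k < e.
Proof. exact: (@tail_small R a Bnd a_ge0 psum_bnd). Qed.

Lemma step_le k : `|x k.+1 - x k| <= t k * enorm (d k).
Proof.
have -> : x k.+1 - x k = t k *: d k by rewrite Hx addrAC subrr add0r.
by rewrite normrZ ger0_norm // ler_wpM2l // norm_le_enorm.
Qed.

Lemma steps0 e : 0 < e -> exists K, forall k, (K <= k)%N -> t k * enorm (d k) < e.
Proof.
move=> e0.
have T0 := T_ge0.
have [K0 HK0] := tail _ (divr_gt0 (exprn_gt0 2 e0) (ltr_wpDl T0 ltr01)).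
exists (maxn K0 N) => k hk.
have hk0 : (K0 <= k)%N by apply: leq_trans hk; apply: leq_maxl.
have hkN : (N <= k)%N by apply: leq_trans hk; apply: leq_maxr.
have := HK0 k k.+1 hk0; rewrite big_nat1 => ha.
have htT : t k <= T by exact: HtN.
apply: small_sq => //; first by rewrite mulr_ge0 // enorm_ge0.
have -> : (t k * enorm (d k)) ^+ 2 = t k * a k by rewrite /a; ring.
have ha0 := a_ge0 k.
have h1 : t k * a k <= T * a k by rewrite ler_wpM2r.
have h2 : (T + 1) * a k < e ^+ 2.
  by rewrite mulrC -ltr_pdivlMr // ltr_wpDl // ltr01.
lra.
Qed.


Lemma sum_t_bounded_false (i : nat) (B : R) :
  (forall j, \sum_(i <= k < i + j) t k <= B) -> False.
Proof.
move=> H.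
have [M _ HM] := (cvgryPge _).1 Hdiv (\sum_(0 <= k < i) t k + B + 1).
have := HM M (leqnn M) => /= hM.
have e1 : \sum_(0 <= k < M.+1) t k = t 0%N + \sum_(1 <= k < M.+1) t k by rewrite big_ltn.
have e2 : \sum_(0 <= k < i + M.+1) t k = \sum_(0 <= k < M.+1) t k + \sum_(M.+1 <= k < i + M.+1) t k.
  by rewrite -big_cat_nat // leq_addl.
have e3 : \sum_(0 <= k < i + M.+1) t k = \sum_(0 <= k < i) t k + \sum_(i <= k < i + M.+1) t k.
  by rewrite -big_cat_nat // leq_addr.
have h0 : 0 <= \sum_(M.+1 <= k < i + M.+1) t k by apply: sumr_ge0.
have := H M.+1; have := Ht 0%N; lra.
Qed.

Lemma stationary p : cluster (x @ \oo) p -> grad f p = 0.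
Proof.
move=> cp; apply/eqP; apply/negPn/negP => hg.
have g0p : 0 < `|grad f p| by rewrite normr_gt0.
have g2 : 0 < `|grad f p| / 2 by rewrite divr_gt0.
have [r r0 hr] : exists2 r, 0 < r & forall y, `|p - y| < r -> `|grad f p| / 2 < enorm (grad f y).
  have hc : grad f @ p --> grad f p := HC1.2 p.
  have hn := (cvgrPdist_lt _ _).1 hc (`|grad f p| / 2) g2.
  have [r r0 hb] := (nbhs_ballP _ _).1 (hn (nbhs_filter p)).
  exists r => // y hy.
  have /= hy2 := hb y ltac:(by rewrite ballN).
  have := ler_normD (grad f p - grad f y) (grad f y); rewrite subrK => h.
  apply: (key1 h hy2); exact: norm_le_enorm.
have [c c0 [K2 HK2]] : exists2 c, 0 < c & exists K2, forall k, (K2 <= k)%N ->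
    `|p - x k| < r -> c <= enorm (d k).
  apply: contrapT => Hn.
  have hpsi : forall K, exists k, (K <= k)%N /\ `|p - x k| < r /\ enorm (d k) < 1 / K.+1%:R.
    move=> K; apply: contrapT => HnK; apply: Hn; exists (1 / K.+1%:R); first by rewrite divr_gt0.
    exists K => k hk hp; rewrite leNgt; apply/negP => hlt; apply: HnK.
    by exists k.
  have [psi Hpsi] := choice hpsi.
  have [cv inf] := @psi_cvg0 R n psi d (fun K => (Hpsi K).1) (fun K => (Hpsi K).2.2).
  have [N2 HN2] := Hga _ inf cv _ g2.
  have hJ : range psi (psi N2) by exists N2.
  have h1 := HN2 (psi N2) hJ ((Hpsi N2).1).
  have h2 := hr _ (Hpsi N2).2.1.
  by have := lt_trans h2 h1; rewrite ltxx.
have cr : 0 < c * r / 4 by rewrite divr_gt0 // mulr_gt0.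
have [K0 HK0] := tail _ cr.
have [i [hi hpi]] := (@clusterP R n x p).1 cp (r / 2) (divr_gt0 r0 (ltr0Sn _ 1)) (maxn K0 K2).
have hiK0 : (K0 <= i)%N by apply: leq_trans hi; apply: leq_maxl.
have hiK2 : (K2 <= i)%N by apply: leq_trans hi; apply: leq_maxr.
have hsc : forall j, (\sum_(i <= k < i + j) a k) / c < r / 4.
  by move=> j; rewrite ltr_pdivrMr // mulrC mulrA; exact: HK0.
have inv : forall j, `|x (i + j)%N - x i| <= (\sum_(i <= k < i + j) a k) / c.
  elim => [|j IH]; first by rewrite addn0 subrr normr0 big_geq // mul0r.
  have hpj : `|p - x (i + j)%N| < r.
    have := ler_distD (x i) p (x (i + j)%N); rewrite (distrC (x i)) => h.
    exact: (tri3 (normr_ge0 _) h hpi IH (hsc j)).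
  have hc := HK2 (i + j)%N (leq_trans hiK2 (leq_addr j i)) hpj.
  have hst := step_le (i + j).
  have hta : t (i + j)%N * enorm (d (i + j)%N) <= a (i + j)%N / c.
    rewrite ler_pdivlMr // /a expr2 mulrA ler_wpM2l // mulr_ge0 //; exact: enorm_ge0.
  rewrite addnS big_nat_recr /=; last exact: leq_addr.
  rewrite mulrDl.
  have := ler_distD (x (i + j)%N) (x (i + j).+1) (x i) => h.
  exact: (tri2 h (le_trans hst hta) IH).
have inball : forall j, `|p - x (i + j)%N| < r.
  move=> j; have := ler_distD (x i) p (x (i + j)%N); rewrite (distrC (x i)) => h.
  exact: (tri3 (normr_ge0 _) h hpi (inv j) (hsc j)).
apply: (@sum_t_bounded_false i (r / (4 * c))) => j.
clear hpi hr inv hsc.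
have h1 : \sum_(i <= k < i + j) (c ^+ 2 * t k) <= \sum_(i <= k < i + j) a k.
  apply: ler_sum_nat => k /andP [hik hkj].
  have hk := HK2 k (leq_trans hiK2 hik).
  rewrite -(subnKC hik) in hk.
  have hck := hk (inball (k - i)%N); rewrite subnKC // in hck.
  rewrite /a mulrC ler_wpM2l //.
  by rewrite !expr2 ler_pM // ltW.
rewrite -mulr_sumr in h1.
exact: (fin1 c0 h1 (HK0 i (i + j) hiK0)).
Qed.

Lemma grad_cvg0 tau : 0 < tau -> (forall k, tau <= t k) ->
  (fun k => grad f (x k)) @ \oo --> (0 : 'rV[R]_n).
Proof.
move=> tau0 htau.
have cv : cvg0_along setT d.
  move=> e e0.
  have [K0 HK0] := tail _ (mulr_gt0 tau0 (exprn_gt0 2 e0)).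
  exists K0 => k _ hk.
  have := HK0 k k.+1 hk; rewrite big_nat1 /a => ha.
  apply: small_sq => //; first exact: enorm_ge0.
  rewrite -(ltr_pM2l tau0); apply: le_lt_trans ha.
  by rewrite ler_wpM2r // exprn_ge0 // enorm_ge0.
have cg := Hga _ infinite_nat cv.
apply/cvgrPdist_lt => e e0.
have [N2 HN2] := cg e e0.
exists N2 => // k /= hk.
rewrite sub0r normrN; apply: le_lt_trans; first exact: norm_le_enorm.
exact: HN2.
Qed.

Lemma steps0n e : 0 < e -> exists K, forall k, (K <= k)%N -> `|x k.+1 - x k| < e.
Proof.
move=> e0; have [K HK] := steps0 _ e0.
by exists K => k hk; apply: le_lt_trans (step_le k) (HK k hk).
Qed.

End Main.


Lemma exists_inv (R : realType) (e : R) : 0 < e -> exists K, forall k, (K <= k)%N -> 1 / k.+1%:R < e.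
Proof.
move=> e0; exists (Num.trunc (e^-1)) => k hk.
have h1 : e^-1 < (Num.trunc e^-1).+1%:R by exact: truncnS_gt.
have h2 : ((Num.trunc e^-1).+1%:R : R) <= k.+1%:R by rewrite ler_nat.
rewrite div1r -[e]invrK ltf_pV2 ?posrE ?invr_gt0 //.
exact: lt_le_trans h1 h2.
Qed.

Lemma crossing (R : realType) (h : nat -> R) (a s : R) (i j : nat) : (i <= j)%N -> h i < a -> a <= h j ->
  (forall k, (i <= k)%N -> `|h k.+1 - h k| < s) ->
  exists k, (i <= k)%N /\ a <= h k /\ h k < a + s.
Proof.
move=> hij hi hj hs.
rewrite -(subnKC hij) in hj.
elim: (j - i)%N hj => [|m IH] hm; first by rewrite addn0 in hm; have := lt_le_trans hi hm; rewrite ltxx.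
have [hle|hlt] := leP a (h (i + m)%N); first exact: IH.
exists (i + m).+1; split; first by rewrite -addnS leq_addr.
rewrite addnS in hm; split => //.
have := hs (i + m)%N (leq_addr m i); rewrite ltr_norml => /andP [_ h2].
have : h (i + m).+1 < h (i + m)%N + s by rewrite -ltrBlDl.
move=> h3; apply: (lt_trans h3); by rewrite ltrD2r.
Qed.

Lemma trih (R : realType) (A B C e : R) : A <= B + C -> B < e / 2 -> C < e / 2 -> A < e.
Proof. move=> *; lra. Qed.
Lemma tri2f (R : realType) (A B C e : R) : 0 < e -> A <= B + C -> B < e / 3 -> C < e / 3 -> e <= A -> False.
Proof. move=> *; lra. Qed.
Lemma tri3f (R : realType) (A B C D E e : R) : A <= B + E -> E <= C + D -> B < e / 3 -> C < e / 3 -> D < e / 3 -> e <= A -> False.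
Proof. move=> *; lra. Qed.
Arguments trih {R A B C e}.
Arguments tri2f {R A B C e}.
Arguments tri3f {R A B C D E e}.

Lemma trib (R : realType) (A B C D : R) : A <= B + C -> B <= D -> C < 1 -> A <= D + 1.
Proof. move=> *; lra. Qed.
Arguments trib {R A B C D}.

Section Topo2.
Variables (R : realType) (n : nat) (y : nat -> 'rV[R]_n).
Hypothesis Hs : forall e, 0 < e -> exists K, forall k, (K <= k)%N -> `|y k.+1 - y k| < e.

Let C := cluster (y @ \oo).

Lemma cluster_closed : closed C.
Proof.
move=> z hz; apply/(@clusterP R n y z) => e e0 K.
have [w [Cw bw]] := hz _ (nbhsx_ballx z (e / 2) (divr_gt0 e0 (ltr0Sn _ 1))).
have [k [hk hwk]] := (@clusterP R n y w).1 Cw (e / 2) (divr_gt0 e0 (ltr0Sn _ 1)) K.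
exists k; split => //.
rewrite ballN in bw.
exact: (trih (ler_distD w z (y k)) bw hwk).
Qed.

Lemma isolated_conv p : isolated_in C p -> y @ \oo --> p.
Proof.
move=> [Cp [U [nU hU]]].
have [r0 r00 hr0] := (nbhs_ballP _ _).1 nU.
apply/cvgrPdist_lt => e e0; apply: contrapT => Hne.
have Hfar : forall K, exists k, (K <= k)%N /\ e <= `|p - y k|.
  move=> K; apply: contrapT => H; apply: Hne; exists K => // k /= hk.
  rewrite ltNge; apply/negP => hle; apply: H; by exists k.
pose s := Num.min e (r0 / 2).
have s0 : 0 < s by rewrite lt_min e0 divr_gt0.
have s2 : 0 < s / 2 by rewrite divr_gt0.
have hse : s <= e by rewrite ge_min lexx.
have hsr : s <= r0 / 2 by rewrite ge_min lexx orbT.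
have HBW : forall K, exists k, (K <= k)%N /\ [set w | `|p - w| <= s] (y k) /\
    [set w | s / 2 <= `|p - w|] (y k).
  move=> K.
  have [Ks HKs] := Hs _ s2.
  have [i [hi hpi]] := (@clusterP R n y p).1 Cp (s / 2) s2 (maxn K Ks).
  have [j [hj hpj]] := Hfar i.
  have hsj : s / 2 <= `|p - y j|.
    apply: le_trans hpj; apply: le_trans hse; by rewrite ler_pdivrMr // ler_pMr // ler1n.
  have hstep : forall k, (i <= k)%N -> `| `|p - y k.+1| - `|p - y k| | < s / 2.
    move=> k hk; apply: le_lt_trans (ler_dist_dist _ _) _.
    rewrite opprB addrC addrA subrK distrC.
    apply: HKs; apply: leq_trans hk; apply: leq_trans hi; exact: leq_maxr.
  have [k [hik [h1 h2]]] := @crossing R (fun k => `|p - y k|) _ _ _ _ hj hpi hsj hstep.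
  exists k; split; first by apply: leq_trans hik; apply: leq_trans hi; exact: leq_maxl.
  split => //=; apply: ltW; by rewrite {1}(splitr s).
have [z [Ez Hz]] := @BW R n _ _ y (@closed_ball_compact R n p s s0) HBW.
have Cz : C z.
  apply/(@clusterP R n y z) => e' e'0 K; have [k [hk [_ h]]] := Hz e' e'0 K; by exists k.
have Uz : U z.
  apply: hr0; rewrite ballN; apply: le_lt_trans Ez _; apply: le_lt_trans hsr _.
  by rewrite ltr_pdivrMr // ltr_pMr // ltr1n.
have : (C `&` U) z by [].
rewrite hU => /= zp; subst z.
have [k [_ [h1 h2]]] := Hz (s / 2) s2 0%N.
by have := le_lt_trans h1 h2; rewrite ltxx.
Qed.

Lemma cluster_props M : (forall k, `|y k| <= M) -> C !=set0 /\ compact C /\ connected C.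
Proof.
move=> hb.
pose Mp := `|M| + 1.
have Mp0 : 0 < Mp by rewrite /Mp ltr_pwDr // normr_ge0.
pose Eb := [set w : 'rV[R]_n | `|0 - w| <= Mp].
have cEb : compact Eb := @closed_ball_compact R n 0 Mp Mp0.
have yE : forall k, Eb (y k).
  move=> k; rewrite /Eb /= sub0r normrN; apply: le_trans (hb k) _.
  by apply: le_trans (ler_norm M) _; rewrite /Mp lerDl.
have CE : C `<=` Eb.
  move=> z Cz; have [k [_ hk]] := (@clusterP R n y z).1 Cz 1 ltr01 0%N.
  rewrite distrC in hk.
  have hB : `|0 - y k| <= `|M| by rewrite sub0r normrN; apply: le_trans (hb k) (ler_norm M).
  exact: (trib (ler_distD (y k) 0 z) hB hk).
have ne : C !=set0.
  have HH : forall K, exists k, (K <= k)%N /\ Eb (y k) /\ setT (y k).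
    by move=> K; exists K; split => //; split => //; exact: yE.
  have [z [_ Hz]] := @BW R n Eb setT y cEb HH.
  exists z; apply/(@clusterP R n y z) => e e0 K; have [k [hk [_ h]]] := Hz e e0 K; by exists k.
have cC : compact C := subclosed_compact cluster_closed cEb CE.
split => //; split => //.
move=> B [p Bp] [U oU hBU] [V cV hBV].
apply: contrapT => hne.
have BC : B `<=` C by rewrite hBU => w [].
have [q [Cq nBq]] : exists q, C q /\ ~ B q.
  apply: contrapT => H; apply: hne; apply/seteqP; split => // w Cw.
  apply: contrapT => nBw; apply: H; by exists w.
have nUq : ~ U q by move=> Uq; apply: nBq; rewrite hBU.
pose Q := C `&` ~` U.
have Qq : Q q by [].
have cB : compact B.
  rewrite hBV; apply: (subclosed_compact _ cEb).
    exact: closedI cluster_closed cV.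
  by move=> w [Cw _]; exact: CE.
have clQ : closed Q by apply: closedI cluster_closed (open_closedC oU).
have BQ : forall w, B w -> Q w -> False.
  by move=> w Bw [_ nUw]; apply: nUw; move: Bw; rewrite hBU => -[].
have [eta eta0 Heta] : exists2 eta, 0 < eta & forall u v, B u -> Q v -> eta <= `|u - v|.
  apply: contrapT => Hn.
  have H1 : forall j : nat, exists uv : 'rV[R]_n * 'rV[R]_n,
      B uv.1 /\ Q uv.2 /\ `|uv.1 - uv.2| < 1 / j.+1%:R.
    move=> j; apply: contrapT => Hj; apply: Hn; exists (1 / j.+1%:R); first by rewrite divr_gt0.
    move=> u v Bu Qv; rewrite leNgt; apply/negP => hlt; apply: Hj; by exists (u, v).
  have [uv Huv] := choice H1.
  have HH : forall K, exists k, (K <= k)%N /\ B (uv k).1 /\ setT (uv k).1.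
    by move=> K; exists K; split => //; split => //; exact: (Huv K).1.
  have [z [Bz Hz]] := @BW R n B setT (fun j => (uv j).1) cB HH.
  apply: (BQ z Bz); apply: clQ => W hWn.
  have [eps eps0 hW] := (nbhs_ballP _ _).1 hWn.
  have eps2 : 0 < eps / 2 by rewrite divr_gt0.
  have [K1 HK1] := @exists_inv R _ eps2.
  have [k [hk [_ hzk]]] := Hz (eps / 2) eps2 K1.
  exists (uv k).2; split; first exact: (Huv k).2.1.
  apply: hW; rewrite ballN.
  exact: (trih (ler_distD (uv k).1 z (uv k).2) hzk (lt_trans (Huv k).2.2 (HK1 k hk))).
pose O1 w := exists2 u, B u & `|u - w| < eta / 3.
pose O2 w := exists2 v, Q v & `|v - w| < eta / 3.
have e3 : 0 < eta / 3 by rewrite divr_gt0.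
have [K1 HK1] : exists K1, forall k, (K1 <= k)%N -> O1 (y k) \/ O2 (y k).
  apply: contrapT => Hn.
  have Hinf : forall K, exists k, (K <= k)%N /\ Eb (y k) /\ (~` (O1 `|` O2)) (y k).
    move=> K; apply: contrapT => HK; apply: Hn; exists K => k hk.
    apply: contrapT => hno; apply: HK; exists k; split; first exact: hk.
    split; first exact: yE.
    move=> [h|h]; apply: hno; [left|right]; exact: h.
  have [z [_ Hz]] := @BW R n Eb _ y cEb Hinf.
  have Cz : C z.
    by apply/(@clusterP R n y z) => e e0 K; have [k [hk [_ h]]] := Hz e e0 K; exists k.
  have [k [_ [hS hk]]] := Hz (eta / 3) e3 0%N.
  apply: hS; have [Uz|nUz] := pselect (U z).
    left; exists z => //; rewrite hBU; by split.
  right; exists z => //; by split.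
have [Ks HKs] := Hs _ e3.
have step : forall k, (maxn K1 Ks <= k)%N -> O1 (y k) -> O1 (y k.+1).
  move=> k hk [u Bu hu].
  have hk1 : (K1 <= k.+1)%N by apply: leq_trans (leq_maxl _ _) (leq_trans hk (leqnSn k)).
  have hks : (Ks <= k)%N by apply: leq_trans (leq_maxr _ _) hk.
  case: (HK1 _ hk1) => // -[v Qv hv].
  exfalso.
  have h1 := ler_distD (y k) u v.
  have h2 := ler_distD (y k.+1) (y k) v.
  have h3 := HKs _ hks; rewrite distrC in h3.
  rewrite distrC in hv.
  exact: (tri3f h1 h2 hu h3 hv (Heta u v Bu Qv)).
have [k0 [hk0 hpk0]] := (@clusterP R n y p).1 (BC _ Bp) (eta / 3) e3 (maxn K1 Ks).
have allO1 : forall j, O1 (y (k0 + j)%N).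
  elim => [|j IH]; first by rewrite addn0; exists p.
  rewrite addnS; apply: step => //; exact: leq_trans hk0 (leq_addr _ _).
have [j [hj hqj]] := (@clusterP R n y q).1 Cq (eta / 3) e3 k0.
have := allO1 (j - k0)%N; rewrite subnKC // => -[u Bu hu].
rewrite distrC in hqj.
exact: (tri2f eta0 (ler_distD (y j) u q) hu hqj (Heta u q Bu Qq)).
Qed.

End Topo2.

Theorem mainTheorem3 (R : realType) (n : nat) (f : 'rV[R]_n -> R)
  (x d : nat -> 'rV[R]_n) (t : nat -> R) (L kappa delta : R) (N : nat) :
  C1 f ->
  (forall k, x k.+1 = x k + t k *: d k) ->
  (forall k, 0 <= t k) ->
  (exists m : R, forall k, m <= f (x k)) ->
  (* (a) *)
  0 < L -> L_descent f L ->
  (* (b) *)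
  gradient_associated f x d ->
  0 < kappa ->
  (forall k, dotp (grad f (x k)) (d k) <= - kappa * enorm (d k) ^+ 2) ->
  (* (c) *)
  (fun K => \sum_(1 <= k < K.+1) t k) @ \oo --> +oo ->
  0 < delta -> delta < 2 * kappa ->
  (forall k, (N <= k)%N -> t k <= (2 * kappa - delta) / L) ->
  (* conclusions *)
  (forall p, cluster (x @ \oo) p -> grad f p = 0) /\
  ((exists M : R, forall k, enorm (x k) <= M) ->
     cluster (x @ \oo) !=set0 /\ compact (cluster (x @ \oo)) /\
     connected (cluster (x @ \oo))) /\
  (forall p, isolated_in (cluster (x @ \oo)) p -> x @ \oo --> p) /\
  ((exists tau : R, 0 < tau /\ forall k, tau <= t k) ->
     (fun k => grad f (x k)) @ \oo --> (0 : 'rV[R]_n)).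
Proof.
move=> HC1 Hx Ht [m Hm] HL Hdesc Hga Hk Hsd Hdiv Hd Hd2 HtN.
have Hs := @steps0n R n f x d t L kappa delta m N Hx Ht Hm HL Hdesc Hsd Hd Hd2 HtN.
split.
  move=> p; exact: (@stationary R n f x d t L kappa delta m N Hx Ht Hm HL Hdesc Hsd Hd HtN HC1 Hga Hdiv p).
split.
  move=> [M HM]; apply: (@cluster_props R n x Hs M) => k.
  apply: le_trans (HM k); exact: norm_le_enorm.
split.
  move=> p; exact: (@isolated_conv R n x Hs p).
move=> [tau [tau0 htau]].
exact: (@grad_cvg0 R n f x d t L kappa delta m N Hx Ht Hm HL Hdesc Hsd Hd HtN Hga tau tau0 htau).
Qed.
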